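(* Both sequences $(S_m)_{m\ge0}$ and $(P_m)_{m\ge0}$ are log-convex, i.e. for each of them $a_m\ge0$ for all $m\ge0$ and $a_{m-1}a_{m+1}\ge a_m^2$ for all $m\ge1$.
   Context: $(S_n)_{n\ge0}$ is the integer sequence defined by $S_0=1$, $S_1=4$ and $(n+1)^2S_{n+1}=4(3n^2+3n+1)S_n-32n^2S_{n-1}$ for $n\ge1$; equivalently $S_n=\sum_{k=0}^n\binom nk\binom{2k}k\binom{2n-2k}{n-k}$. The Catalan–Larcombe–French numbers are $P_n=2^nS_n$ (equivalently $P_0=1$, $P_1=8$, $(n+1)^2P_{n+1}=8(3n^2+3n+1)P_n-128n^2P_{n-1}$ for $n\ge1$). *)

(* Defs.v *)
From mathcomp Require Import all_boot.
Set Implicit Arguments. Unset Strict Implicit. Unset Printing Implicit Defensive.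

Definition S (n : nat) : nat :=
  \sum_(0 <= k < n.+1) 'C(n, k) * 'C(2 * k, k) * 'C(2 * n - 2 * k, n - k).

Definition P (n : nat) : nat := 2 ^ n * S n.

(* log-convexity of a nat-valued sequence (nonnegativity is automatic in nat,
   but kept explicit) *)
Definition log_convex (a : nat -> nat) : Prop :=
  (forall m, 0 <= a m) /\ (forall m, 1 <= m -> a m.-1 * a m.+1 >= a m ^ 2).

(* Main.v *)
Require Import Defs.
From mathcomp Require Import all_boot all_order all_algebra ring zify.
Import Order.TTheory GRing.Theory Num.Theory.

Definition c j := 'C(2 * j, j).

Lemma cS j : c j.+1 * j.+1 = 2 * (2 * j + 1) * c j.
Proof.
have h1 : c j * (j`! * j`!) = (2 * j)`!.
  have := @bin_fact (2 * j) j; rewrite (_ : 2 * j - j = j); last lia.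
  by move=> -> //; lia.
have h2 : c j.+1 * (j.+1`! * j.+1`!) = (2 * j.+1)`!.
  have := @bin_fact (2 * j.+1) j.+1; rewrite (_ : 2 * j.+1 - j.+1 = j.+1); last lia.
  by move=> -> //; lia.
have e : (2 * j.+1)`! = (2 * j).+2 * (2 * j).+1 * (2 * j)`!.
  by rewrite (_ : 2 * j.+1 = (2 * j).+2) ?factS ?mulnA //; lia.
rewrite e -h1 !factS in h2.
have hp : 0 < j`! * j`! * j.+1 by rewrite !muln_gt0 !fact_gt0.
apply/eqP; rewrite -(eqn_pmul2r hp); apply/eqP.
move: h2; set C1 := c j.+1; set C0 := c j; set f := j`! => h2.
nia.
Qed.

Lemma Rk n k : k < n ->
  'C(n, k.+1) * c k.+1 * c (n - k.+1) * (k.+1 ^ 2 * (2 * (n - k.+1) + 1))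
  = 'C(n, k) * c k * c (n - k) * ((n - k) ^ 2 * (2 * k + 1)).
Proof.
move=> lt; have [j ->] : exists j, n = k + j.+1 by exists (n - k.+1); lia.
have e1 : k + j.+1 - k.+1 = j by lia.
have e2 : k + j.+1 - k = j.+1 by lia.
rewrite e1 e2.
have h1 := mul_bin_left (k + j.+1) k. rewrite e2 in h1.
have h2 := cS k. have h3 := cS j.
set C0 := 'C(_, k) in h1 *; set C1 := 'C(_, k.+1) in h1 *.
transitivity ((k.+1 * C1) * (c k.+1 * k.+1) * (c j * (2 * j + 1))); first ring.
rewrite h1 h2.
transitivity (C0 * c k * (c j.+1 * j.+1) * (j.+1 * (2 * k + 1))); last ring.
rewrite h3; ring.
Qed.

Lemma R1 m k : k <= m ->
  'C(m, k) * c k * c (m - k) * (2 * m.+1 * (2 * (m - k) + 1))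
  = 'C(m.+1, k) * c k * c (m.+1 - k) * (m.+1 - k) ^ 2.
Proof.
move=> le; have [j ->] : exists j, m = k + j by exists (m - k); lia.
have e1 : k + j - k = j by lia.
have e2 : (k + j).+1 - k = j.+1 by lia.
rewrite e1 e2.
have h1 := mul_bin_down (k + j).+1 k. rewrite e2 /= in h1.
have h3 := cS j.
set C0 := 'C(k + j, k) in h1 *; set C1 := 'C((k + j).+1, k) in h1 *.
transitivity (((k + j).+1 * C0) * c k * (2 * (2 * j + 1) * c j)); first ring.
rewrite h1 -h3; ring.
Qed.

Local Open Scope ring_scope.

Definition Fn n k := ('C(n, k) * c k * c (n - k))%N.
Definition F n k : rat := (Fn n k)%:R.

Lemma eq_diff (a b x y : rat) : x = y -> a - b = x - y -> a = b.
Proof. by move=> -> /eqP; rewrite subrr subr_eq0 => /eqP. Qed.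

Lemma F0 n k : (n < k)%N -> F n k = 0.
Proof. by move=> h; rewrite /F /Fn bin_small. Qed.

Lemma FRk m k :
  F m k.+1 * (k.+1%:R) ^+ 2 * (2 * m%:R - 2 * k%:R - 1)
  = F m k * (m%:R - k%:R) ^+ 2 * (2 * k%:R + 1).
Proof.
have [lt|ge] := ltnP k m.
  have [j ej] : exists j, m = (k + j.+1)%N by exists (m - k.+1)%N; lia.
  have q1 : (k + j.+1 - k.+1 = j)%N by lia.
  have q2 : (k + j.+1 - k = j.+1)%N by lia.
  have H := congr1 (fun x : nat => x%:R : rat) (Rk m k lt).
  rewrite /= ej q1 q2 in H.
  rewrite /F /Fn ej q1 q2.
  rewrite -[k.+1]addn1 -[j.+1]addn1 in H *.
  rewrite /= !(natrM, natrD, natrX) in H *.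
  apply: (@eq_diff _ _ _ _ H); ring.
rewrite F0 ?mul0r; last lia.
have [e|lt] := eqVneq k m; first by rewrite e subrr expr0n /= !mulr0 mul0r.
by rewrite F0 ?mul0r //; rewrite ltn_neqAle eq_sym lt ge.
Qed.

Lemma FR1 m k :
  F m k * (2 * m.+1%:R * (2 * m%:R + 1 - 2 * k%:R))
  = F m.+1 k * (m.+1%:R - k%:R) ^+ 2.
Proof.
have [le|gt] := leqP k m.
  have [j ej] : exists j, m = (k + j)%N by exists (m - k)%N; lia.
  have q1 : (k + j - k = j)%N by lia.
  have q2 : ((k + j).+1 - k = j.+1)%N by lia.
  have H := congr1 (fun x : nat => x%:R : rat) (R1 m k le).
  rewrite /= ej q1 q2 in H.
  rewrite /F /Fn ej q1 q2.
  rewrite -[j.+1]addn1 -[(k + j).+1]addn1 in H *.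
  rewrite /= !(natrM, natrD, natrX) in H *.
  apply: (@eq_diff _ _ _ _ H); ring.
rewrite F0 ?mul0r //.
have [e|lt] := eqVneq k m.+1; first by rewrite e subrr expr0n /= !mulr0.
by rewrite F0 ?mul0r //; rewrite ltn_neqAle eq_sym lt gt.
Qed.

Lemma odd_ne (a b : nat) : (2 * a%:R + 1 - 2 * b%:R != 0 :> rat).
Proof.
rewrite subr_eq0 -[2]/(2%:R) -!natrM natr1 eqr_nat; apply/eqP; lia.
Qed.

Definition g (n : nat) (x : rat) : rat :=
  let N := n%:R in
  x ^+ 2 * (- (2 * N + 1) ^+ 2 * (N + 2) + 2 * (2 * N + 1) * (2 * N + 3) * x
            - 4 * (N + 1) * x ^+ 2) / ((2 * N + 3 - 2 * x) * (2 * N + 1 - 2 * x)).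

Definition G n k := F n.+2 k * g n k%:R.

Lemma step n k :
  (n%:R + 2) * ((n%:R + 2) ^+ 2 * F n.+2 k
    - 4 * (3 * n%:R ^+ 2 + 9 * n%:R + 7) * F n.+1 k
    + 32 * (n%:R + 1) ^+ 2 * F n k) = G n k.+1 - G n k.
Proof.
set N : rat := n%:R; set K : rat := k%:R.
have eN1 : n.+1%:R = N + 1 by rewrite -natr1.
have eN2 : n.+2%:R = N + 2 by rewrite -natr1 eN1 -addrA.
have eK1 : k.+1%:R = K + 1 by rewrite -natr1.
have n3 : 2 * N + 3 - 2 * K != 0.
  by have := odd_ne n.+1 k; rewrite eN1 (_ : 2 * (N + 1) + 1 = 2 * N + 3) //; ring.
have n1 : 2 * N + 1 - 2 * K != 0 by exact: odd_ne.
have nm1 : 2 * N + 1 - 2 * (K + 1) != 0 by rewrite -eK1; exact: odd_ne.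
have nK : K + 1 != 0 by rewrite -eK1 pnatr_eq0.
have nN1 : N + 1 != 0 by rewrite -eN1 pnatr_eq0.
have nN2 : N + 2 != 0 by rewrite -eN2 pnatr_eq0.
have e1 := FR1 n.+1 k. have e0 := FR1 n k. have ek := FRk n.+2 k.
rewrite eN1 eN2 -/K in e1 e0 ek. rewrite eK1 in ek.
have f1 : F n.+1 k = F n.+2 k * (N + 2 - K) ^+ 2 / (2 * (N + 2) * (2 * (N + 1) + 1 - 2 * K)).
  rewrite -e1 mulfK //; apply: mulf_neq0; first by apply: mulf_neq0.
  by rewrite (_ : 2 * (N + 1) + 1 - 2 * K = 2 * N + 3 - 2 * K) //; ring.
have f0 : F n k = F n.+1 k * (N + 1 - K) ^+ 2 / (2 * (N + 1) * (2 * N + 1 - 2 * K)).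
  by rewrite -e0 mulfK //; apply: mulf_neq0; first by apply: mulf_neq0.
have fk : F n.+2 k.+1 = F n.+2 k * (N + 2 - K) ^+ 2 * (2 * K + 1) / ((K + 1) ^+ 2 * (2 * (N + 2) - 2 * K - 1)).
  rewrite -ek -(mulrA (F n.+2 k.+1)) mulfK //; apply: mulf_neq0; first by rewrite expf_neq0.
  by rewrite (_ : 2 * (N + 2) - 2 * K - 1 = 2 * N + 3 - 2 * K) //; ring.
rewrite /G /g -/N eK1 -/K f0 f1 fk.
move: n3 n1 nm1 nK nN1 nN2.
set T := F n.+2 k.
move=> n3 n1 nm1 nK nN1 nN2.
rewrite (_ : 2 * (N + 1) + 1 - 2 * K = 2 * N + 3 - 2 * K); last ring.
rewrite (_ : 2 * (N + 2) - 2 * K - 1 = 2 * N + 3 - 2 * K); last ring.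
rewrite (_ : 2 * N + 3 - 2 * (K + 1) = 2 * N + 1 - 2 * K); last ring.
field; by rewrite n1 n3 nm1 nK nN1 nN2.
Qed.

Lemma Seq n : S n = (\sum_(0 <= k < n.+1) Fn n k)%N.
Proof. by rewrite /S; apply: eq_bigr => k _; rewrite /Fn /c mulnBr. Qed.

Lemma Ssum n d : (S n)%:R = \sum_(0 <= k < (n.+1 + d)%N) F n k.
Proof.
elim: d => [|d IH]; first by rewrite addn0 Seq natr_sum.
by rewrite addnS big_nat_recr //= -IH F0 ?addr0 //; lia.
Qed.

Lemma recS n :
  ((n.+2 ^ 2) * S n.+2 + 32 * (n.+1 ^ 2) * S n = 4 * (3 * n ^ 2 + 9 * n + 7) * S n.+1)%N.
Proof.
set N : rat := n%:R.
have H : \sum_(0 <= k < n.+3) ((N + 2) * ((N + 2) ^+ 2 * F n.+2 k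
    - 4 * (3 * N ^+ 2 + 9 * N + 7) * F n.+1 k
    + 32 * (N + 1) ^+ 2 * F n k)) = 0.
  rewrite (eq_bigr (fun k => G n k.+1 - G n k)); last by move=> k _; rewrite step.
  rewrite telescope_sumr // /G F0 // mul0r /g expr0n /= !mul0r. by rewrite mulr0 subr0.
rewrite -mulr_sumr !big_split /= sumrN -!mulr_sumr in H.
have e2 := Ssum n.+2 0. have e1 := Ssum n.+1 1. have e0 := Ssum n 2.
rewrite addn0 in e2. rewrite addn1 in e1. rewrite addn2 in e0.
rewrite -e2 -e1 -e0 in H.
move/eqP: H; rewrite mulf_eq0 => /orP [hz|/eqP X0]; first move: hz.
  rewrite (_ : N + 2 = n.+2%:R) ?pnatr_eq0 // /N -!natr1; ring.
apply/eqP; rewrite -(eqr_nat rat) !(natrD, natrM, natrX).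
rewrite -subr_eq0 -/N; apply/eqP; rewrite -X0.
rewrite -!natr1 -/N; ring.
Qed.

Lemma sub_of_add (u v w : int) : u + v = w -> v = w - u.
Proof. by move<-; ring. Qed.

Lemma eq_diffZ (a b x y : int) : x = y -> a - b = x - y -> a = b.
Proof. by move=> -> /eqP; rewrite subrr subr_eq0 => /eqP. Qed.

Lemma lc (n a b c : nat) :
  ((n.+2 ^ 2) * c + 32 * (n.+1 ^ 2) * a = 4 * (3 * n ^ 2 + 9 * n + 7) * b)%N ->
  (4 * a <= b)%N -> ((n + 2) * b <= 8 * (n + 1) * a)%N ->
  (b ^ 2 <= a * c)%N.
Proof.
move=> r h1 h2.
have [x ex] : exists x, b = (4 * a + x)%N by exists (b - 4 * a)%N; lia.
have [y ey] : exists y, ((n + 2) * b + y = 8 * (n + 1) * a)%N by exists (8 * (n + 1) * a - (n + 2) * b)%N; lia.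
have [z ez] : exists z, (b + z = 8 * a)%N by exists (8 * a - b)%N; nia.
have E : ((n.+2 ^ 2) * (a * c) = n.+2 ^ 2 * b ^ 2 + n.+2 * x * y + 4 * n.+1 * a * z)%N.
  apply/eqP; rewrite -(eqr_nat int); apply/eqP.
  have r' := congr1 (fun t : nat => (t * a)%N%:R : int) r.
  have ex' := congr1 (fun t : nat => t%:R : int) ex.
  have ey' := congr1 (fun t : nat => t%:R : int) ey.
  have ez' := congr1 (fun t : nat => t%:R : int) ez.
  rewrite /= !(natrD, natrM, natrX) -!natr1 in r' ex' ey' ez' *.
  rewrite (@sub_of_add _ _ _ ey') (@sub_of_add _ _ _ ez') ex' in r' *.
  apply: (@eq_diffZ _ _ _ _ r'); ring.
have : (n.+2 ^ 2 * b ^ 2 <= n.+2 ^ 2 * (a * c))%N by rewrite E -addnA leq_addr.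
by rewrite leq_pmul2l ?expn_gt0.
Qed.

Local Close Scope ring_scope.

Lemma stepI (n a b c : nat) :
  ((n.+2 ^ 2) * c + 32 * (n.+1 ^ 2) * a = 4 * (3 * n ^ 2 + 9 * n + 7) * b)%N ->
  4 * a <= b -> (n + 2) * b <= 8 * (n + 1) * a ->
  4 * b <= c /\ (n + 3) * c <= 8 * (n + 2) * b.
Proof.
move=> r h1 h2; split.
  have : n.+2 ^ 2 * (4 * b) <= n.+2 ^ 2 * c by nia.
  by rewrite leq_pmul2l ?expn_gt0.
have : n.+2 ^ 2 * ((n + 3) * c) <= n.+2 ^ 2 * (8 * (n + 2) * b) by nia.
by rewrite leq_pmul2l ?expn_gt0.
Qed.

Lemma inv n : 4 * S n <= S n.+1 /\ (n + 2) * S n.+1 <= 8 * (n + 1) * S n.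
Proof.
elim: n => [|n [h1 h2]]; first by rewrite /S !big_nat_recr //= !big_geq.
have := @stepI _ _ _ _ (recS n) h1 h2.
have e1 : (n.+1 + 2 = n + 3)%N by lia.
have e2 : (n.+1 + 1 = n + 2)%N by lia.
by rewrite e1 e2.
Qed.

Theorem corollary4p1 : log_convex S /\ log_convex P.
Proof.
have hS : forall m, 1 <= m -> S m.-1 * S m.+1 >= S m ^ 2.
  case=> // n _ /=; have [h1 h2] := inv n.
  exact: (@lc _ _ _ _ (recS n) h1 h2).
split; split.
- by [].
- exact: hS.
- by [].
move=> m hm.
have := hS m hm; case: m hm => // n _ /= h.
rewrite /P.
have e : 2 ^ n * S n * (2 ^ n.+2 * S n.+2) = (2 ^ n.+1) ^ 2 * (S n * S n.+2).
  rewrite !expnS; ring.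
rewrite e expnMn leq_pmul2l ?expn_gt0 //.
Qed.
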